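(* Let $(M,s)$ be an initial $\mathbf{S5}$-state of a definite action theory such that every $u\in M[S]$ is reachable from $s$. Let $u,v\in M[S]$ with $M[\pi](u)=M[\pi](v)$. Then for every agent $i$ and every $x\in M[S]$ with $(u,x)\in M[i]$ there exists $y\in M[S]$ with $(v,y)\in M[i]$ and $M[\pi](x)=M[\pi](y)$.
   Context: Agents $\mathcal{AG}=\{1,\dots,n\}$, finite set of fluents $\mathcal F$. Belief formulae are built from propositional (fluent) formulae over $\mathcal F$ with $\mathbf B_i$, Boolean connectives and $\mathbf E_\alpha,\mathbf C_\alpha$; $\mathbf C=\mathbf C_{\mathcal{AG}}$. Kripke structures $M$: worlds $M[S]$, interpretations $M[\pi](u)\subseteq\mathcal F$, relations $M[i]$; state $(M,s)$; standard semantics ($\mathbf B_i\varphi$: $\varphi$ at all $M[i]$-successors; $\mathbf E_\alpha$: all $\mathbf B_i$, $i\in\alpha$; $\mathbf C_\alpha\varphi$: $\mathbf E^k_\alpha\varphi$ for all $k\ge0$). $\mathbf{S5}$-state: every $M[i]$ an equivalence relation. $v$ is reachable from $u$ if connected by a finite (possibly empty) chain of pairs each in some $M[j]$. An action theory $(I,D)$ consists of a domain $D$ (action descriptions) and a set $I$ of statements ''initially $\varphi$''; an initial $\mathbf{S5}$-state of it is an $\mathbf{S5}$-state satisfying every $\varphi$ with ''initially $\varphi$'' $\in I$. It is definite if every statement of $I$ is of one of the forms initially $\varphi$, initially $\mathbf C\varphi$, initially $\mathbf C(\mathbf B_i\varphi)$, initially $\mathbf C(\mathbf B_i\varphi\vee\mathbf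 B_i\neg\varphi)$, initially $\mathbf C(\neg\mathbf B_i\varphi\wedge\neg\mathbf B_i\neg\varphi)$ ($\varphi$ fluent formula, $i$ agent), and for every fluent formula $\varphi$ and agent $i$, $I$ contains a statement of one of the last three forms with this $i$ and $\varphi$. *)

(* Defs.v *)
From mathcomp Require Import all_boot.
Set Implicit Arguments.
Unset Strict Implicit.
Unset Printing Implicit Defensive.

Section Syntax.
Variables (n : nat) (F : finType).

Inductive fform : Type :=
| FAtom of F
| FNot of fform
| FAnd of fform & fform
| FOr of fform & fform.

Inductive bform : Type :=
| BFl of fform
| BB of 'I_n & bform
| BNot of bform
| BAnd of bform & bform
| BOr of bform & bform
| BE of {set 'I_n} & bform
| BC of {set 'I_n} & bform.

Definition BCall (phi : bform) : bform := BC [set: 'I_n] phi.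
End Syntax.

Section Semantics.
Variables (n : nat) (F : finType) (W : Type)
          (R : 'I_n -> W -> W -> Prop) (pi : W -> {set F}).

Fixpoint fsat (u : W) (phi : fform F) : Prop :=
  match phi with
  | FAtom f => f \in pi u
  | FNot p => ~ fsat u p
  | FAnd p q => fsat u p /\ fsat u q
  | FOr p q => fsat u p \/ fsat u q
  end.

Definition Eop (al : {set 'I_n}) (P : W -> Prop) (u : W) : Prop :=
  forall i, i \in al -> forall t, R i u t -> P t.

Fixpoint Eiter (al : {set 'I_n}) (k : nat) (P : W -> Prop) : W -> Prop :=
  match k with
  | 0 => P
  | k'.+1 => Eop al (Eiter al k' P)
  end.

Fixpoint bsat (u : W) (phi : bform n F) : Prop :=
  match phi with
  | BFl p => fsat u p
  | BB i p => forall t, R i u t -> bsat t p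
  | BNot p => ~ bsat u p
  | BAnd p q => bsat u p /\ bsat u q
  | BOr p q => bsat u p \/ bsat u q
  | BE al p => Eop al (fun t => bsat t p) u
  | BC al p => forall k, Eiter al k (fun t => bsat t p) u
  end.

Definition is_equiv (r : W -> W -> Prop) : Prop :=
  (forall x, r x x) /\ (forall x y, r x y -> r y x) /\
  (forall x y z, r x y -> r y z -> r x z).

Definition S5 : Prop := forall i, is_equiv (R i).

Inductive reachable (u : W) : W -> Prop :=
| reach_refl : reachable u u
| reach_step : forall v w j, reachable u v -> R j v w -> reachable u w.
End Semantics.

(* The initial statements I of an action theory, as the set of formulae phi
   with "initially phi" in I. *)
Definition definite (n : nat) (F : finType) (I : bform n F -> Prop) : Prop :=
  (forall phi, I phi ->
     (exists p, phi = BFl n p) \/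
     (exists p, phi = BCall (BFl n p)) \/
     (exists i p, phi = BCall (BB i (BFl n p))) \/
     (exists i p, phi = BCall (BOr (BB i (BFl n p)) (BB i (BFl n (FNot p))))) \/
     (exists i p, phi = BCall (BAnd (BNot (BB i (BFl n p)))
                                    (BNot (BB i (BFl n (FNot p)))))))
  /\
  (forall (p : fform F) (i : 'I_n),
     I (BCall (BB i (BFl n p))) \/
     I (BCall (BOr (BB i (BFl n p)) (BB i (BFl n (FNot p))))) \/
     I (BCall (BAnd (BNot (BB i (BFl n p))) (BNot (BB i (BFl n (FNot p))))))).

Definition initial_S5_state (n : nat) (F : finType) (I : bform n F -> Prop)
  (W : Type) (R : 'I_n -> W -> W -> Prop) (pi : W -> {set F}) (s : W) : Prop :=
  S5 R /\ forall phi, I phi -> bsat R pi s phi.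

(* Main.v *)
Require Import Defs.
From mathcomp Require Import all_boot.
From Stdlib Require Import Classical.

Section Aux.
Variables (n : nat) (F : finType) (W : Type)
          (R : 'I_n -> W -> W -> Prop) (pi : W -> {set F}).

Lemma Eiter_shift (al : {set 'I_n}) k (Q : W -> Prop) u :
  Eiter R al k.+1 Q u -> Eiter R al k (Eop R al Q) u.
Proof.
elim: k u => [|k IH] u; first by [].
move=> H; rewrite /=; move=> i Hi t Rt; apply: IH; exact: (H i Hi t Rt).
Qed.

Lemma C_reach s w : reachable R s w -> forall Q : W -> Prop,
  (forall k, Eiter R [set: 'I_n] k Q s) -> Q w.
Proof.
elim=> [|v w' j _ IH Rj] Q H; first exact: (H 0).
have := IH (Eop R [set: 'I_n] Q) (fun k => Eiter_shift _ _ _ _ (H k.+1)).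
by move=> /(_ j (in_setT j) w' Rj).
Qed.

Fixpoint charf (A : {set F}) (f0 : F) (s : seq F) : fform F :=
  match s with
  | [::] => FOr (FAtom f0) (FNot (FAtom f0))
  | f :: s' => FAnd (if f \in A then FAtom f else FNot (FAtom f)) (charf A f0 s')
  end.

Lemma charfP A f0 s w :
  fsat pi w (charf A f0 s) <-> (forall f, f \in s -> (f \in pi w) = (f \in A)).
Proof.
elim: s => [|f s IH] /=.
  split=> // _; by case: (boolP (f0 \in pi w)) => H; [left|right].
split.
  move=> [H1 /IH H2] g; rewrite in_cons => /orP [/eqP ->|]; last exact: H2.
  case: (boolP (f \in A)) H1 => _ /= H1; first by [].
  by apply/negbTE/negP.
move=> H; split; last by apply/IH => g Hg; apply: H; rewrite in_cons Hg orbT.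
have := H f (mem_head _ _); case: (f \in A) => /= ->; by [].
Qed.

Lemma charfE A f0 w : fsat pi w (charf A f0 (enum F)) <-> pi w = A.
Proof.
rewrite charfP; split.
  by move=> H; apply/setP => f; apply: H; rewrite mem_enum.
by move=> -> f.
Qed.
End Aux.

Theorem lemma12 (n : nat) (F : finType) (I : bform n F -> Prop)
  (W : Type) (R : 'I_n -> W -> W -> Prop) (pi : W -> {set F}) (s : W) :
  definite I ->
  initial_S5_state I R pi s ->
  (forall u : W, reachable R s u) ->
  forall u v : W, pi u = pi v ->
  forall (i : 'I_n) (x : W), R i u x ->
  exists y : W, R i v y /\ pi x = pi y.
Proof.
move=> [_ Hdef] [HS5 Hsat] Hreach u v Huv i x Rux.
have reflv : R i v v by case: (HS5 i).
case: (pickP (@predT F)) => [f0 _|Hnone]; last first.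
  exists v; split=> //; apply/setP => f; by have := Hnone f.
set p := @charf F (pi x) f0 (enum F).
have Cw : forall phi, I (BCall phi) -> forall w, bsat R pi w phi.
  move=> phi Iphi w; have := Hsat _ Iphi; rewrite /BCall /= => H.
  exact: (@C_reach n W R s w (Hreach w) (fun t => bsat R pi t phi) H).
have BiU : (forall t, R i u t -> pi t = pi x) -> exists y, R i v y /\ pi x = pi y.
  move=> H; exists v; split=> //; rewrite -Huv; symmetry; apply: H.
  by case: (HS5 i).
case: (Hdef p i) => [/Cw H | [/Cw H | /Cw H]].
- apply: BiU => t Rt; have := H u => /= /(_ t Rt); by rewrite charfE.
- have := H u => /= [[H1|H1]].
    by apply: BiU => t Rt; have := H1 t Rt; rewrite charfE.
  exfalso; have := H1 x Rux => /=; apply; by rewrite charfE.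
- have := H v => /= [[_ H2]].
  apply: NNPP => Hno; apply: H2 => t Rt Ht; apply: Hno; exists t; split=> //.
  by symmetry; exact: (proj1 (@charfE F W pi (pi x) f0 t) Ht).
Qed.
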